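(* The global Kuroda principle is strictly stronger than the local Kuroda principle: every descriptive $\mathsf{MS4}$-frame satisfying the global Kuroda principle satisfies the local Kuroda principle, and there is a finite $\mathsf{MS4}$-frame satisfying the local Kuroda principle but not the global Kuroda principle.
   Context: A descriptive $\mathsf{MS4}$-frame is $(Y,R,E)$ with $Y$ a Stone space, $R$ a continuous quasi-order, $E$ a continuous equivalence relation (continuous: $R[x]=\{y:xRy\}$ closed for all $x$, $R^{-1}[U]$ clopen for clopen $U$), such that $xEy$, $yRz$ imply $\exists u$ with $xRu$, $uEz$; finite $\mathsf{MS4}$-frames (with the discrete topology) are descriptive. $\operatorname{qmax}Y=\{x: xRy\Rightarrow yRx\}$; $xE_Ry$ iff $xRy$ and $yRx$. Global Kuroda principle: for every $x\in\operatorname{qmax}Y$, $E[x]\subseteq\operatorname{qmax}Y$. Local Kuroda principle: for every $x\in\operatorname{qmax}Y$ there is $y$ with $xE_Ry$ and $E[y]\subseteq\operatorname{qmax}Y$. *)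

(* Defs.v *)
From HB Require Import structures.
From mathcomp Require Import all_boot all_order.
From mathcomp Require Import boolp classical_sets topology.
Set Implicit Arguments. Unset Strict Implicit. Unset Printing Implicit Defensive.
Local Open Scope classical_set_scope.

Definition quasi_order {T : Type} (R : T -> T -> Prop) :=
  (forall x, R x x) /\ (forall x y z, R x y -> R y z -> R x z).

Definition equivalence_rel {T : Type} (E : T -> T -> Prop) :=
  (forall x, E x x) /\ (forall x y, E x y -> E y x) /\
  (forall x y z, E x y -> E y z -> E x z).

Definition ms4_commutation {T : Type} (R E : T -> T -> Prop) :=
  forall x y z, E x y -> R y z -> exists u, R x u /\ E u z.

Definition ms4_frame {T : Type} (R E : T -> T -> Prop) :=
  [/\ quasi_order R, equivalence_rel E & ms4_commutation R E].

Definition image_rel {T : Type} (R : T -> T -> Prop) (x : T) : set T :=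
  [set y | R x y].
Definition preimage_rel {T : Type} (R : T -> T -> Prop) (U : set T) : set T :=
  [set x | exists y, R x y /\ U y].

Definition stone_space (T : topologicalType) :=
  [/\ compact (@setT T), hausdorff_space T &
      forall (U : set T) (x : T), open U -> U x ->
        exists V : set T, [/\ clopen V, V x & V `<=` U]].

Definition continuous_rel {T : topologicalType} (R : T -> T -> Prop) :=
  (forall x, closed (image_rel R x)) /\
  (forall U : set T, clopen U -> clopen (preimage_rel R U)).

Definition descriptive_ms4_frame (T : topologicalType) (R E : T -> T -> Prop) :=
  [/\ stone_space T, ms4_frame R E, continuous_rel R & continuous_rel E].

Definition qmax {T : Type} (R : T -> T -> Prop) : set T :=
  [set x | forall y, R x y -> R y x].

Definition E_R {T : Type} (R : T -> T -> Prop) (x y : T) := R x y /\ R y x.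

Definition global_kuroda {T : Type} (R E : T -> T -> Prop) :=
  forall x, qmax R x -> image_rel E x `<=` qmax R.

Definition local_kuroda {T : Type} (R E : T -> T -> Prop) :=
  forall x, qmax R x -> exists y, E_R R x y /\ image_rel E y `<=` qmax R.

(* Main.v *)
Require Import Defs.
From HB Require Import structures.
From mathcomp Require Import all_boot all_order.
From mathcomp Require Import boolp classical_sets topology.

Definition Rb (x y : 'I_3) : bool := (val x == 2) || (val y != 2).
Definition Eb (x y : 'I_3) : bool := (x == y) || ((val x != 1) && (val y != 1)).

Lemma comm_b (x y z : 'I_3) : Eb x y -> Rb y z -> exists u, Rb x u && Eb u z.
Proof.
case: x => [[|[|[|a]]] ha] //; case: y => [[|[|[|b]]] hb] //;
 case: z => [[|[|[|c]]] hc] //= H1 H2;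
 first [ by exists (Ordinal (isT : 0 < 3)) | by exists (Ordinal (isT : 1 < 3))
       | by exists (Ordinal (isT : 2 < 3)) ].
Qed.

Theorem proposition4p3 :
  (forall (T : topologicalType) (R E : T -> T -> Prop),
      descriptive_ms4_frame R E -> global_kuroda R E -> local_kuroda R E) /\
  (exists (T : finType) (R E : T -> T -> Prop),
      [/\ ms4_frame R E, local_kuroda R E & ~ global_kuroda R E]).
Proof.
split.
  move=> T R E [_ [[Rr _] _ _] _ _] G x qx.
  exists x; split; first by split; apply: Rr.
  exact: G.
exists ('I_3 : finType), (fun x y => Rb x y), (fun x y => Eb x y).
split.
- split.
  + split; first by move=> x; rewrite /Rb; case: eqP => //= ->.
    move=> x y z; rewrite /Rb; case: (val x == 2) => //=.
    by case: eqP => //= -> /=; case: eqP.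
  + split; first by move=> x; rewrite /Eb eqxx.
    split; first by move=> x y; rewrite /Eb eq_sym andbC.
    by do 3 case=> [[|[|[|?]]] ?] //.
  + move=> x y z Exy Ryz.
    have [u /andP [? ?]] := @comm_b x y z Exy Ryz; by exists u.
- move=> x qx; exists (Ordinal (isT : 1 < 3)).
  have x2 : val x != 2.
    apply/negP => /eqP h.
    have := qx (Ordinal (isT : 0 < 3)); rewrite /Rb h /=; by move/(_ isT).
  split; first by split; rewrite /Rb /= ?(negbTE x2) ?orbT.
  move=> y; rewrite /image_rel /= /Eb /= => /orP [/eqP <-|] /=.
    by move=> z _; rewrite /Rb /= orbT.
  by [].
- move=> G.
  have q0 : qmax (fun x y => Rb x y) (Ordinal (isT : 0 < 3)).
    by move=> y _; rewrite /Rb /= orbT.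
  have q2 := G (Ordinal (isT : 0 < 3)) q0 (Ordinal (isT : 2 < 3)) isT.
  have := q2 (Ordinal (isT : 0 < 3)) isT.
  by rewrite /Rb.
Qed.
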